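(* Let $q>0$, $q\neq1$. For every integer $N\ge 2$, $$\Big(x\frac{d}{dx}-N\Big)H_N(x;q)=2\,[N]_q\,[N-1]_q\,H_{N-2}(x;q).$$
   Context: For $n\ge 0$ let $[n]_q=\frac{q^n-1}{q-1}$, $[0]_q!=1$, $[n]_q!=[1]_q\cdots[n]_q$, and $e_q(z)=\sum_{n\ge0}z^n/[n]_q!$. The $q$-Hermite polynomials $H_N(x;q)$ are defined by the identity of formal power series in $t$: $e^{-t^2}e_q([2]_q t x)=\sum_{N\ge0}H_N(x;q)\,t^N/[N]_q!$. *)

(* Defs.v *)
From HB Require Import structures.
From mathcomp Require Import all_boot all_order all_algebra.
Set Implicit Arguments. Unset Strict Implicit. Unset Printing Implicit Defensive.
Import Order.TTheory GRing.Theory Num.Theory.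
Local Open Scope ring_scope.

Definition qint (R : realFieldType) (q : R) (n : nat) : R := (q ^+ n - 1) / (q - 1).

Definition qfact (R : realFieldType) (q : R) (n : nat) : R :=
  \prod_(1 <= i < n.+1) qint q i.

(* coefficient of t^j in e^{-t^2} = sum_k (-1)^k t^(2k) / k! *)
Definition expm_sq_coef (R : realFieldType) (j : nat) : R :=
  if odd j then 0 else (-1) ^+ (j./2) / (j./2)`!%:R.

(* coefficient of t^m in e_q([2]_q t x), as a polynomial in x:
   [2]_q^m x^m / [m]_q! *)
Definition eq_coef (R : realFieldType) (q : R) (m : nat) : {poly R} :=
  ((qint q 2) ^+ m / qfact q m) *: 'X^m.

(* H_N(x;q) = [N]_q! * (coefficient of t^N in e^{-t^2} e_q([2]_q t x)),
   the coefficient being the Cauchy product of the two series. *)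
Definition qHermite (R : realFieldType) (q : R) (N : nat) : {poly R} :=
  qfact q N *: \sum_(j < N.+1) (expm_sq_coef R j *: eq_coef q (N - j)).

(* Main.v *)
Require Import Defs.
From HB Require Import structures.
From mathcomp Require Import all_boot all_order all_algebra.
From mathcomp Require Import ring.
Import Order.TTheory GRing.Theory Num.Theory.
Local Open Scope ring_scope.

Lemma term (R : realFieldType) (b : R) (m M : nat) :
  'X * (b *: 'X^m)^`() - M%:R *: (b *: 'X^m) = ((m%:R - M%:R) * b) *: 'X^m.
Proof.
rewrite derivZ derivXn -scalerAr mulrnAr -exprS; case: m => [|m] /=.
  by rewrite mulr0n scaler0 !scalerA mulrBl mul0r !sub0r scaleNr.
by rewrite -scaler_nat !scalerA -scalerBl; congr (_ *: _); ring.
Qed.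

Lemma op_sum (R : realFieldType) (c : R) M (F : nat -> R) (G : nat -> nat) :
  'X * (c *: \sum_(j < M.+1) (F j *: 'X^(G j)))^`() - M%:R *: (c *: \sum_(j < M.+1) (F j *: 'X^(G j)))
  = c *: \sum_(j < M.+1) (((G j)%:R - M%:R) * F j) *: 'X^(G j).
Proof.
rewrite derivZ -scalerAr.
have -> : M%:R *: (c *: \sum_(j < M.+1) (F j *: 'X^(G j))) = c *: (M%:R *: \sum_(j < M.+1) (F j *: 'X^(G j))).
  by rewrite !scalerA mulrC.
rewrite -scalerBr; congr (_ *: _).
rewrite raddf_sum mulr_sumr scaler_sumr -sumrB; apply: eq_bigr => j _.
exact: term.
Qed.

Lemma coefS (R : realFieldType) i :
  (i.+2%:R : R) * expm_sq_coef R i.+2 = - 2 * expm_sq_coef R i.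
Proof.
rewrite /expm_sq_coef /= ?negbK; case: ifP => Ho; first by rewrite !mulr0.
have Hi : i = (i./2).*2 by rewrite -{1}(odd_double_half i) Ho add0n.
set k := i./2 in Hi *.
rewrite Hi -doubleS -!muln2 factS natrM natrM exprS invfM.
have k0 : (k`!%:R : R) != 0 by rewrite pnatr_eq0 -lt0n fact_gt0.
have k1 : (k.+1%:R : R) != 0 by rewrite pnatr_eq0.
field; by rewrite k0 addrC natr1 k1.
Qed.

Lemma qfactSS (R : realFieldType) (q : R) n :
  qfact q n.+2 = qint q n.+2 * qint q n.+1 * qfact q n.
Proof.
rewrite /qfact big_nat_recr //= big_nat_recr //=; ring.
Qed.

Theorem mainTheorem3 (R : realFieldType) (q : R) (hq0 : 0 < q) (hq1 : q != 1)
  (N : nat) (hN : (2 <= N)%N) :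
  'X * (qHermite q N)^`() - N%:R *: qHermite q N
  = (2 * qint q N * qint q (N - 1)) *: qHermite q (N - 2).
Proof.
case: N hN => [|[|n]] // _.
rewrite /qHermite /eq_coef.
under eq_bigr do rewrite scalerA.
rewrite (op_sum _ (qfact q n.+2) n.+2 (fun j => expm_sq_coef R j * (qint q 2 ^+ (n.+2 - j) / qfact q (n.+2 - j))) (fun j => (n.+2 - j)%N)) !subSS subn0 qfactSS scalerA.
rewrite !subn0 (_ : 2 * qint q n.+2 * qint q n.+1 * qfact q n = qint q n.+2 * qint q n.+1 * qfact q n * 2); last by ring.
rewrite -[in RHS]scalerA; congr (_ *: _).
rewrite big_ord_recl big_ord_recl /= subn0 subrr mul0r scale0r add0r.
have -> : expm_sq_coef R (bump 0 0) = 0 by [].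
rewrite mul0r mulr0 scale0r add0r.
rewrite scaler_sumr; apply: eq_bigr => i _.
rewrite /bump /= !add1n subSS scalerA scalerA; congr (_ *: _).
rewrite !subSS natrB; last by rewrite -ltnS.
rewrite (_ : n%:R - i%:R - n.+2%:R = - (i.+2%:R) :> R); last first.
  by rewrite -[n.+2]addn2 -[i.+2]addn2 !natrD; ring.
rewrite mulNr !mulrA coefS; ring.
Qed.
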